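(* Let $G$ be a finite simple forest on vertex set $\{x_1,\dots,x_n\}$, let $\Bbbk$ be a field and $S=\Bbbk[x_1,\dots,x_n]$. Then for every integer $k$ with $1\leq k\leq \operatorname{mat}(G)$, \[\operatorname{reg}(I(G)^{[k]})\leq \operatorname{aim}(G,k)+k.\]
   Context: $I(G)\subseteq S$ is the edge ideal, generated by $x_ix_j$ for edges $\{x_i,x_j\}$ of $G$. $\operatorname{mat}(G)$ is the matching number (maximum size of a set of pairwise disjoint edges). For $1\le k\le\operatorname{mat}(G)$, the $k$th squarefree power $I(G)^{[k]}$ is the ideal generated by the products $e_1\cdots e_k$ over all matchings $\{e_1,\dots,e_k\}$ of $G$ of size $k$ (an edge $\{x_i,x_j\}$ identified with the monomial $x_ix_j$); it is $(0)$ if $k>\operatorname{mat}(G)$. $\operatorname{reg}$ denotes Castelnuovo–Mumford regularity. Two edges form a gap if they are disjoint and no edge of $G$ joins a vertex of one to a vertex of the other. A sequence $(a_1,\dots,a_n)$ of integers is $k$-admissable if $a_i\ge1$ for all $i$ and $a_1+\dots+a_n\le n+k-1$. For $1\le k\le\operatorname{mat}(G)$, a matching $M$ of $G$ is $k$-admissable if there are nonempty pairwise disjoint subsets $M_1,\dots,M_r$ of $M$ with $M=M_1\cup\dots\cup M_r$ such that: for $i\ne j$, any $e\in M_i$ and $f\in M_j$ form a gap in $G$; the sequence $(|M_1|,\dots,|M_r|)$ is $k$-admissable; and for each $i$ the induced subgraph of $G$ on $\bigcup_{e\in M_i}e$ is a forest. $\operatorname{aim}(G,k)$ is the maximum size of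 a $k$-admissable matching of $G$ (and $0$ if none exists). *)

(* Defs.v *)
From HB Require Import structures.
From mathcomp Require Import all_boot all_order all_algebra.
From mathcomp Require Import boolp.
Set Implicit Arguments. Unset Strict Implicit. Unset Printing Implicit Defensive.
Import GRing.Theory.

(* A finite simple graph on vertices x_0..x_{n-1} is a
   symmetric irreflexive relation e : rel 'I_n.  Edges are 2-element vertex sets. *)

Section Graph.
Variables (n : nat) (e : rel 'I_n).

Definition is_edge (f : {set 'I_n}) : bool :=
  [exists x, exists y, e x y && (f == [set x; y])].

Definition matching (M : {set {set 'I_n}}) : bool :=
  [forall f in M, is_edge f] && trivIset M.

Definition mat : nat := \max_(M : {set {set 'I_n}} | matching M) #|M|.

Definition acyclic_on (W : {set 'I_n}) : Prop :=
  ~ exists p : seq 'I_n,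
      [/\ uniq p, 2 < size p, all (fun v => v \in W) p & cycle e p].

Definition forest : Prop := acyclic_on setT.

Definition gap (f g : {set 'I_n}) : bool :=
  [disjoint f & g] && [forall x in f, forall y in g, ~~ e x y].

Definition admissable_seq (k : nat) (s : seq nat) : bool :=
  all (fun a => 0 < a) s && (sumn s <= size s + k - 1).

Definition kadm_matching (k : nat) (M : {set {set 'I_n}}) : Prop :=
  matching M /\
  exists P : {set {set {set 'I_n}}},
    [/\ partition P M,
        (forall B C, B \in P -> C \in P -> B != C ->
           forall f g, f \in B -> g \in C -> gap f g),
        admissable_seq k [seq #|B : {set {set 'I_n}}| | B : {set {set 'I_n}} <- enum P]
      & forall B, B \in P -> acyclic_on (cover B)].

Definition aim (k : nat) : nat :=
  \max_(M : {set {set 'I_n}} | `[< kadm_matching k M >]) #|M|.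

(* A monomial x^b (b : exponent vector) lies in I(G)^[k] iff it is divisible
   by some generator e_1...e_k = prod_{v in cover M} x_v, M a k-matching. *)
Definition mono_in_sqpow (k : nat) (b : {ffun 'I_n -> nat}) : bool :=
  [exists M : {set {set 'I_n}},
     [&& matching M, #|M| == k & [forall v in cover M, 0 < b v]]].

(* ---- multigraded Betti numbers via the Koszul complex ----
   Tor_i^S(I,F)_a = H_i(K(x_0..x_{n-1}) (x)_S I)_a.  In multidegree a the
   i-th chain group has basis e_Fs (x) x^(a - 1_Fs) for Fs with |Fs| = i,
   Fs contained in supp a and x^(a - 1_Fs) in I. *)
Definition subind (a : {ffun 'I_n -> nat}) (Fs : {set 'I_n}) :
  {ffun 'I_n -> nat} := [ffun v => a v - (v \in Fs)].

Definition kvalid (k : nat) (a : {ffun 'I_n -> nat}) (Fs : {set 'I_n}) : bool :=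
  [forall v in Fs, 0 < a v] && mono_in_sqpow k (subind a Fs).

Definition kbasis (k i : nat) (a : {ffun 'I_n -> nat}) : {set {set 'I_n}} :=
  [set Fs : {set 'I_n} | (#|Fs| == i) && kvalid k a Fs].

Variable R : fieldType.

Definition ksign (Fs : {set 'I_n}) (j : 'I_n) : R :=
  (-1) ^+ #|[set u in Fs | (u < j)%N]|.

(* matrix of the Koszul differential d_i : K_i -> K_{i-1} in degree a
   (row-vector convention, rows/cols indexed by all vertex subsets;
   rows/cols outside the bases are zero) *)
Definition kdiff (k i : nat) (a : {ffun 'I_n -> nat}) :
  'M[R]_(#|{: {set 'I_n}}|, #|{: {set 'I_n}}|) :=
  \matrix_(p, q)
    (let Fs : {set 'I_n} := enum_val p in let Gs : {set 'I_n} := enum_val q in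
     if [&& #|Fs| == i, kvalid k a Fs, kvalid k a Gs,
            Gs \subset Fs & #|Fs| == #|Gs|.+1]
     then (if [pick j in Fs :\: Gs] is Some j then ksign Fs j else 0%R)
     else 0%R).

(* beta_{i,a}(I(G)^[k]) over R = dim ker d_i - rank d_{i+1} *)
Definition betti (k i : nat) (a : {ffun 'I_n -> nat}) : nat :=
  #|kbasis k i a| - \rank (kdiff k i a) - \rank (kdiff k i.+1 a).

(* reg(I(G)^[k]) <= r, with reg(I) = max{ |a| - i : beta_{i,a}(I) <> 0 } *)
Definition reg_le (k r : nat) : Prop :=
  forall (i : nat) (a : {ffun 'I_n -> nat}),
    betti k i a != 0%N -> (\sum_v a v <= i + r)%N.

End Graph.

(* Main.v *)
Require Import Defs.
From mathcomp Require Import all_boot all_order all_algebra.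
From mathcomp Require Import zify ring boolp.

(* Proof strategy: Betti numbers are bounded via
   link/deletion rank inequalities and cones on the Koszul complexes;
   the combinatorial induction peels a vertex adjacent to leaves. *)

Set Implicit Arguments. Unset Strict Implicit. Unset Printing Implicit Defensive.
Import GRing.Theory.

Section Homol.
Variables (n : nat) (R : fieldType).
Local Notation T := {set 'I_n}.
Local Notation N := #|{: T}|.

Definition dval (D : pred T) (i : nat) (F G : T) : R :=
  if [&& #|F| == i, D F, D G, G \subset F & #|F| == #|G|.+1]
  then (if [pick j in F :\: G] is Some j then ksign R F j else 0%R) else 0%R.

Definition dmx (D : pred T) (i : nat) : 'M[R]_N :=
  \matrix_(p, q) dval D i (enum_val p) (enum_val q).

Definition cnt (D : pred T) (i : nat) := #|[set F : T | (#|F| == i) && D F]|.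
Definition bet (D : pred T) (i : nat) :=
  cnt D i - \rank (dmx D i) - \rank (dmx D i.+1).

Lemma betti_bet (e : rel 'I_n) k i a : betti e R k i a = bet (kvalid e k a) i.
Proof. by []. Qed.

Lemma eq_bet (D1 D2 : pred T) i : D1 =1 D2 -> bet D1 i = bet D2 i.
Proof.
move=> H; rewrite /bet /cnt /dmx /dval.
have -> : [set F : T | (#|F| == i) && D1 F] = [set F : T | (#|F| == i) && D2 F].
  by apply/setP=> F; rewrite !inE H.
have Em j : dmx D1 j = dmx D2 j by apply/matrixP=> p q; rewrite /dmx /dval !mxE !H.
by rewrite /dmx /dval in Em; rewrite !Em.
Qed.

Lemma pick_one (F G : T) y : y \notin G -> F = y |: G ->
  [pick j in F :\: G] = Some y.
Proof.
move=> yG ->; have -> : (y |: G) :\: G = [set y].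
  apply/setP=> z; rewrite !inE; case: (z =P y) => [->|_]; first by rewrite (negPf yG).
  by rewrite /= andNb.
case: pickP => [z|/(_ y)]; rewrite inE; [by move/eqP->|by rewrite eqxx].
Qed.

Lemma sign_sq (m : nat) : ((-1) ^+ m * (-1) ^+ m = 1 :> R)%R.
Proof. by rewrite -exprD addnn -muln2 exprM sqrr_sign. Qed.

Lemma ksign_sq (F : T) j : (ksign R F j * ksign R F j = 1)%R.
Proof. exact: sign_sq. Qed.

Lemma sum_sel_l (X : T) (c : R) (h : 'I_N -> R) :
  (\sum_r (if enum_val r == X then c else 0) * h r = c * h (enum_rank X))%R.
Proof.
rewrite (bigD1 (enum_rank X)) //= enum_rankK eqxx big1 ?addr0 // => r nr.
case: eqP => [E|]; last by rewrite mul0r.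
by case/eqP: nr; rewrite -E enum_valK.
Qed.

Lemma sum_sel_r (X : T) (c : R) (h : 'I_N -> R) :
  (\sum_r h r * (if enum_val r == X then c else 0) = h (enum_rank X) * c)%R.
Proof.
rewrite (bigD1 (enum_rank X)) //= enum_rankK eqxx big1 ?addr0 // => r nr.
case: eqP => [E|]; last by rewrite mulr0.
by case/eqP: nr; rewrite -E enum_valK.
Qed.

Lemma rank_id_sandwich m (A : 'M[R]_(m, N)) (M : 'M[R]_N) (B : 'M[R]_(N, m)) :
  (A *m M *m B = 1%:M)%R -> (m <= \rank M)%N.
Proof.
move=> E; have := mxrankM_maxl (A *m M) B; rewrite E mxrank1 => h.
exact: leq_trans h (mxrankM_maxr _ _).
Qed.


Lemma mul_sel_l m p (g : 'I_m -> T) (c : 'I_m -> R) (M : 'M[R]_(N, p)) i q :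
  ((\matrix_(i, r) (if enum_val r == g i then c i else 0%R)) *m M)%R i q
  = (c i * M (enum_rank (g i)) q)%R.
Proof. rewrite mxE; under eq_bigr do rewrite mxE; exact: sum_sel_l. Qed.

Lemma mul_sel_r m p (g : 'I_m -> T) (c : 'I_m -> R) (M : 'M[R]_(p, N)) i q :
  (M *m (\matrix_(r, i) (if enum_val r == g i then c i else 0%R)))%R q i
  = (M q (enum_rank (g i)) * c i)%R.
Proof. rewrite mxE; under eq_bigr do rewrite mxE; exact: sum_sel_r. Qed.

Section Cone.
Variables (D : pred T) (x : 'I_n).
Hypothesis Hc : forall F : T, x \notin F -> D (x |: F) = D F.

Lemma cone_A j : (#|[set F : T | [&& x \notin F, #|F| == j & D F]]| <= \rank (dmx D j.+1))%N.
Proof.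
set S := [set F : T | _].
pose Al := (\matrix_(i < #|S|, r < N)
  (if enum_val r == x |: enum_val i then ksign R (x |: enum_val i) x else 0))%R.
pose Ar := (\matrix_(r < N, i < #|S|) (if enum_val r == enum_val i then (1:R) else 0))%R.
apply: (@rank_id_sandwich _ Al _ Ar); apply/matrixP=> i i'.
rewrite mul_sel_r mul_sel_l mulr1 !mxE !enum_rankK /dval.
have := enum_valP i; rewrite inE => /and3P[xi ci Di].
have := enum_valP i'; rewrite inE => /and3P[xi' ci' Di'].
case: (eqVneq i i') => [<-|ne].
  rewrite cardsU1 xi (eqP ci) Hc // Di subsetUr /= eqxx.
  rewrite (@pick_one _ _ x) //; exact: ksign_sq.
case: ifP => [/and5P[_ _ _ sub ceq]|]; last by rewrite mulr0.
have sub' : enum_val i' \subset enum_val i.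
  apply/subsetP=> z zi'; have := subsetP sub z zi'; rewrite !inE.
  case: (z =P x) => [ez _|_ //]; by move: xi'; rewrite -ez zi'.
have : enum_val i' == enum_val i.
  by rewrite eqEcard sub' (eqP ci) (eqP ci') leqnn.
by rewrite (inj_eq enum_val_inj) eq_sym (negPf ne).
Qed.

Lemma cone_B j : (#|[set F : T | [&& x \in F, #|F| == j & D F]]| <= \rank (dmx D j))%N.
Proof.
set S := [set F : T | _].
pose Al := (\matrix_(i < #|S|, r < N) (if enum_val r == enum_val i then (1:R) else 0))%R.
pose Ar := (\matrix_(r < N, i < #|S|)
  (if enum_val r == enum_val i :\ x then ksign R (enum_val i) x else 0))%R.
apply: (@rank_id_sandwich _ Al _ Ar); apply/matrixP=> i i'.
rewrite mul_sel_r mul_sel_l mul1r !mxE !enum_rankK /dval.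
have := enum_valP i; rewrite inE => /and3P[xi ci Di].
have := enum_valP i'; rewrite inE => /and3P[xi' ci' Di'].
have Dx : D (enum_val i :\ x) by rewrite -Hc ?setD11 // setD1K.
case: (eqVneq i i') => [<-|ne].
  rewrite ci Di Dx subD1set (cardsD1 x (enum_val i)) xi eqxx /=.
  rewrite (@pick_one _ _ x) ?setD11 ?setD1K //; exact: ksign_sq.
case: ifP => [/and5P[_ _ _ sub ceq]|]; last by rewrite mul0r.
have sub' : enum_val i' \subset enum_val i.
  apply/subsetP=> z zi'; case: (z =P x) => [->//|/eqP zx].
  by apply: (subsetP sub); rewrite !inE zx.
have : enum_val i' == enum_val i.
  by rewrite eqEcard sub' (eqP ci) (eqP ci') leqnn.
by rewrite (inj_eq enum_val_inj) eq_sym (negPf ne).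
Qed.

Lemma bet_cone j : bet D j = 0%N.
Proof.
have A := cone_A j; have B := cone_B j.
rewrite /bet /cnt.
set C := [set F : T | _].
rewrite -(cardsID [set F : T | x \in F] C).
have -> : C :&: [set F : T | x \in F] = [set F : T | [&& x \in F, #|F| == j & D F]].
  by apply/setP=> F; rewrite !inE andbC.
have -> : C :\: [set F : T | x \in F] = [set F : T | [&& x \notin F, #|F| == j & D F]].
  by apply/setP=> F; rewrite !inE andbC.
lia.
Qed.

End Cone.


Definition mask (P : pred T) : 'M[R]_N := diag_mx (\row_p ((P (enum_val p))%:R))%R.

Lemma maskE (P Q : pred T) (M : 'M[R]_N) p q :
  (mask P *m M *m mask Q)%R p q = ((P (enum_val p))%:R * M p q * (Q (enum_val q))%:R)%R.
Proof. by rewrite /mask mul_mx_diag mul_diag_mx !mxE. Qed.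

Lemma rank_split (M : 'M[R]_N) (P Q : pred T) :
  (forall p q, ~~ P (enum_val p) -> Q (enum_val q) -> M p q = 0%R) ->
  (\rank (mask P *m M *m mask Q)%R + \rank (mask (predC P) *m M *m mask (predC Q))%R
    <= \rank M)%N.
Proof.
move=> H; rewrite -(mxrank_mul_ker M (mask Q)); apply: leq_add.
  by rewrite -mulmxA mxrankM_maxr.
apply: leq_trans (mxrankM_maxl _ _) _.
apply: mxrankS; rewrite sub_capmx submxMl sub_kermx /=.
apply/eqP/matrixP=> p q; rewrite maskE mxE /=.
case Pp: (P (enum_val p)); first by rewrite /= mul0r mul0r.
case Qq: (Q (enum_val q)); last by rewrite mulr0.
by rewrite H ?Pp // mulr0 mul0r.
Qed.

Definition lkP (D : pred T) (x : 'I_n) : pred T := fun F => (x \notin F) && D (x |: F).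
Definition delP (D : pred T) (x : 'I_n) : pred T := fun F => (x \notin F) && D F.

Lemma card_sep_U1 (z : 'I_n) (A : T) (P : pred 'I_n) : z \notin A ->
  #|[set u in z |: A | P u]| = (P z + #|[set u in A | P u]|)%N.
Proof.
move=> zA; case Pz: (P z).
  have -> : [set u in z |: A | P u] = z |: [set u in A | P u].
    by apply/setP=> u; rewrite !inE; case: (u =P z) => [->|] //=; rewrite Pz.
  by rewrite cardsU1 inE (negPf zA).
rewrite add0n; apply: eq_card => u; rewrite !inE; case: (u =P z) => [->|] //=.
by rewrite Pz andbF.
Qed.

Section LinkDel.
Variables (D : pred T) (x : 'I_n).

Lemma del_mx j : dmx (delP D x) j =
  (mask (fun F => x \notin F) *m dmx D j *m mask (fun F => x \notin F))%R.
Proof.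
apply/matrixP=> p q; rewrite maskE !mxE /dval /delP.
case: (boolP (x \in enum_val p)) => xp; case: (boolP (x \in enum_val q)) => xq /=;
  rewrite ?mul0r ?mulr0 ?mul1r ?mulr1 ?andbF //=; by case: ifP.
Qed.

Lemma lk_mx j : (\rank (dmx (lkP D x) j)
  <= \rank (mask (fun F => x \in F) *m dmx D j.+1 *m mask (fun F => x \in F))%R)%N.
Proof.
pose c (F : T) : R := if x \in F then 0%R else ((-1) ^+ #|[set u in F | (x < u)%N]|)%R.
pose Al := (\matrix_(i < N, r < N)
  (if enum_val r == x |: enum_val i then c (enum_val i) else 0))%R.
pose Ar := (\matrix_(r < N, i < N)
  (if enum_val r == x |: enum_val i then c (enum_val i) else 0))%R.
suff -> : dmx (lkP D x) j = (Al *m (mask (fun F => x \in F) *m dmx D j.+1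
   *m mask (fun F => x \in F)) *m Ar)%R.
  by apply: leq_trans (mxrankM_maxl _ _) _; apply: mxrankM_maxr.
apply/matrixP=> p q; rewrite mul_sel_r mul_sel_l maskE !mxE !enum_rankK !setU11 mul1r mulr1.
set F := enum_val p; set G := enum_val q.
rewrite /dval /lkP /c.
case: (boolP (x \in F)) => xF /=; first by rewrite !andbF !mul0r.
case: (boolP (x \in G)) => xG /=; first by rewrite !andbF /= mulr0.
have eqsub : (x |: G \subset x |: F) = (G \subset F).
  apply/idP/idP=> [/subsetP sub|sub]; last by rewrite setUS.
  apply/subsetP=> z zG; have := sub z; rewrite !inE zG orbT => /(_ isT).
  by case/orP=> // /eqP ezx; rewrite -ezx zG in xG.
rewrite eqsub !cardsU1 (negPf xF) (negPf xG) /= !eqSS.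
case: ifP => [/and5P[cF DF DG sub cFG]|]; last by rewrite mulr0 mul0r.
have : F :\: G != set0.
  by apply/negP; rewrite setD_eq0 => /subset_leq_card; rewrite (eqP cFG) ltnn.
case/set0Pn=> y; rewrite inE => /andP[yG yF].
have FyG : F = y |: G.
  apply/eqP; rewrite eq_sym eqEcard (eqP cFG) cardsU1 yG leqnn andbT.
  by rewrite subUset sub1set yF sub.
have yx : y != x by apply: contraNneq xF => <-.
rewrite (@pick_one F G y) // (@pick_one (x |: F) (x |: G) y); first last.
- by rewrite FyG setUCA.
- by rewrite !inE (negPf yx).
rewrite /ksign card_sep_U1 // FyG card_sep_U1 // !exprD.
rewrite ltnn expr0 mul1r card_sep_U1 // exprD.
set a := ((-1) ^+ (x < y))%R; set g := ((-1) ^+ #|[set u in G | (x < u)%N]|)%R.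
set s := ((-1) ^+ #|[set u in G | (u < y)%N]|)%R.
have -> : (a * g * (a * s) * g = (a * a) * (g * g) * s)%R by ring.
by rewrite !sign_sq !mul1r.
Qed.


Lemma rank_LD j : (\rank (dmx (delP D x) j)
  + \rank (mask (fun F => x \in F) *m dmx D j *m mask (fun F => x \in F))%R
  <= \rank (dmx D j))%N.
Proof.
rewrite del_mx addnC; apply: (@rank_split _ (fun F => x \in F) (fun F => x \in F)).
move=> p q xp xq; rewrite mxE /dval; case: ifP => // /and5P[_ _ _ sub _].
by rewrite (subsetP sub _ xq) in xp.
Qed.

Lemma cnt_split j : cnt D j.+1 = (cnt (delP D x) j.+1 + cnt (lkP D x) j)%N.
Proof.
rewrite /cnt; set C := [set F : T | _].
rewrite -(cardsID [set F : T | x \in F] C) addnC; congr (_ + _)%N.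
  by apply: eq_card => F; rewrite !inE /delP andbCA andbA.
have -> : C :&: [set F : T | x \in F] =
    [set x |: F | F in [set F : T | (#|F| == j) && lkP D x F]].
  apply/setP=> H; rewrite !inE; apply/idP/imsetP.
    case/andP=> /andP[cH DH] xH; exists (H :\ x); last by rewrite setD1K.
    rewrite !inE /lkP setD11 setD1K // DH andbT.
    by rewrite andbT; move: cH; rewrite (cardsD1 x H) xH add1n eqSS.
  case=> F; rewrite inE /lkP => /andP[cF /andP[xF DF]] ->.
  by rewrite cardsU1 xF (eqP cF) eqxx DF setU11.
apply: card_in_imset => F1 F2; rewrite !inE /lkP => /and3P[_ x1 _] /and3P[_ x2 _] E.
by rewrite -(setU1K x1) -(setU1K x2) E.
Qed.

Lemma cnt0 : cnt D 0 = cnt (delP D x) 0.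
Proof.
rewrite /cnt; apply: eq_card => F; rewrite !inE /delP.
case: (boolP (#|F| == 0%N)) => //= /eqP /cards0_eq ->; by rewrite inE.
Qed.

Lemma bet_split j : (bet D j.+1 <= bet (delP D x) j.+1 + bet (lkP D x) j)%N.
Proof.
rewrite /bet cnt_split.
have h1 := rank_LD j.+1; have h2 := rank_LD j.+2.
have h3 := lk_mx j; have h4 := lk_mx j.+1.
lia.
Qed.

Lemma bet_split0 : (bet D 0 <= bet (delP D x) 0)%N.
Proof.
rewrite /bet cnt0.
have h1 := rank_LD 0; have h2 := rank_LD 1.
lia.
Qed.

End LinkDel.

End Homol.

Lemma claim_split (n : nat) (R : fieldType) (D : pred {set 'I_n}) x s Td Tl T :
  (forall j, bet R (delP D x) j != 0%N -> (s <= j + Td)%N) ->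
  (forall j, bet R (lkP D x) j != 0%N -> (s <= j + Tl)%N) ->
  (Td < T)%N -> (Tl <= T)%N ->
  forall j, bet R D j != 0%N -> (s.+1 <= j + T)%N.
Proof.
move=> Hd Hl dT lT [|j] nz.
  have := bet_split0 R D x; case: (bet R (delP D x) 0 =P 0%N) => [->|/eqP h _].
    by rewrite leqn0 (negPf nz).
  by have := Hd 0%N h; lia.
have := bet_split R D x j.
case: (bet R (delP D x) j.+1 =P 0%N) => [->|/eqP h _]; last by have := Hd _ h; lia.
case: (bet R (lkP D x) j =P 0%N) => [->|/eqP h _]; last by have := Hl _ h; lia.
by rewrite leqn0 (negPf nz).
Qed.


Section Comb.
Variables (n : nat) (e : rel 'I_n).
Hypotheses (e_sym : symmetric e) (e_irr : irreflexive e).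
Local Notation T := {set 'I_n}.

Lemma edgeP (f : T) : is_edge e f -> exists a b, [/\ e a b, a != b & f = [set a; b]].
Proof.
case/existsP=> a /existsP[b /andP[eab /eqP ->]]; exists a, b; split=> //.
by apply: contraTneq eab => ->; rewrite e_irr.
Qed.

Lemma matching_edge (M : {set T}) (f : T) : matching e M -> f \in M -> is_edge e f.
Proof. by case/andP=> /forall_inP H _; apply: H. Qed.

Lemma matchingS (M M' : {set T}) : M' \subset M -> matching e M -> matching e M'.
Proof.
move=> sub /andP[/forall_inP H ti]; apply/andP; split; last exact: trivIsetS ti.
by apply/forall_inP=> f fM; apply: H; apply: (subsetP sub).
Qed.

Lemma matching0 : matching e set0.
Proof. by apply/andP; split; [apply/forall_inP=> f; rewrite inE|apply/trivIsetP=> A B; rewrite inE]. Qed.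

Lemma partner (M : {set T}) z : matching e M -> z \in cover M ->
  exists2 y, y \in cover M & e z y /\ exists2 f, f \in M & (z \in f) && (y \in f).
Proof.
move=> mM /bigcupP[f fM zf]; have [a [b [eab ab fE]]] := edgeP (matching_edge mM fM).
have af : a \in f by rewrite fE !inE eqxx.
have bf : b \in f by rewrite fE !inE eqxx orbT.
have ca : a \in cover M by apply/bigcupP; exists f.
have cb : b \in cover M by apply/bigcupP; exists f.
move: zf; rewrite fE !inE => /orP[]/eqP->.
  by exists b => //; split=> //; exists f => //; rewrite af bf.
by exists a => //; split; [rewrite e_sym|exists f => //; rewrite af bf].
Qed.

Lemma matching_card1 (M A : {set T}) b : matching e M -> A \subset M ->
  (forall f, f \in A -> b \in f) -> (#|A| <= 1)%N.
Proof.
case/andP=> _ /trivIsetP ti sub Hb; apply/card_le1_eqP=> f g fA gA.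
apply/eqP/negPn/negP=> ne; have := ti g f (subsetP sub _ gA) (subsetP sub _ fA) ne.
by move/disjointFr/(_ (Hb g gA)); rewrite Hb.
Qed.

Lemma edge_neq0 (M : {set T}) (f : T) : matching e M -> f \in M -> f != set0.
Proof.
move=> mM fM; have [a [b [_ _ ->]]] := edgeP (matching_edge mM fM).
by apply/set0Pn; exists a; rewrite !inE eqxx.
Qed.

Lemma matchingU1 (M : {set T}) (g : T) : matching e M -> is_edge e g -> [disjoint g & cover M] ->
  matching e (g |: M) /\ g \notin M.
Proof.
move=> mM eg dis; case/andP: (mM) => /forall_inP H ti.
have [ti' gM] : trivIset (g |: M) /\ g \notin M.
  apply: trivIsetU1 => //.
  - move=> f fM; apply: disjointWr dis; exact: bigcup_sup fM.
  - by apply/negP=> /(edge_neq0 mM); rewrite eqxx.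
split=> //; apply/andP; split=> //; apply/forall_inP=> f.
by case/setU1P=> [->//|]; apply: H.
Qed.

Lemma coverU1 (g : T) (M : {set T}) : cover (g |: M) = g :|: cover M.
Proof. by rewrite /cover bigcup_setU big_set1. Qed.

Lemma sub_matching_k (M : {set T}) k : matching e M -> (k <= #|M|)%N ->
  exists M', [/\ matching e M', M' \subset M & #|M'| = k].
Proof.
move=> mM /card_geqP[s [us ss sub]]; exists [set f in s].
have sub' : [set f in s] \subset M by apply/subsetP=> f; rewrite inE => /sub.
split=> //; first exact: matchingS mM.
by rewrite cardsE (card_uniqP us).
Qed.

Definition Dk (k : nat) (B W : T) : pred T := fun F =>
  (F \subset W) &&
  [exists M : {set T}, [&& matching e M, (k <= #|M|)%N & cover M \subset (W :\: F) :|: B]].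


Lemma Dk_lk k (B W : T) x : x \in W -> lkP (Dk k B W) x =1 Dk k B (W :\ x).
Proof.
move=> xW F; rewrite /lkP /Dk.
have -> : W :\: (x |: F) = (W :\ x) :\: F.
  by apply/setP=> v; rewrite !inE; case: (v == x); case: (v \in F); case: (v \in W).
rewrite andbA; congr (_ && _); rewrite andbC.
apply/idP/idP.
  case/andP=> sub xF; apply/subsetP=> v vF; rewrite !inE (subsetP sub) ?inE ?vF ?orbT //.
  by rewrite andbT; apply: contraNneq xF => <-.
move=> sub; have xF : x \notin F by apply/negP=> /(subsetP sub); rewrite !inE eqxx.
rewrite xF andbT; apply/subsetP=> v; rewrite !inE => /orP[/eqP->//|vF].
by have := subsetP sub v vF; rewrite !inE => /andP[].
Qed.

Lemma Dk_del k (B W : T) x : x \in W -> delP (Dk k B W) x =1 Dk k (x |: B) (W :\ x).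
Proof.
move=> xW F; rewrite /delP /Dk.
case: (boolP (x \in F)) => xF /=.
  by apply/esym/negbTE; apply/negP=> /andP[/subsetP/(_ x xF)]; rewrite !inE eqxx.
have -> : (W :\: F) :|: B = ((W :\ x) :\: F) :|: (x |: B).
  apply/setP=> v; rewrite !inE; case: (v =P x) => [->|] /=; first by rewrite xW xF orbT.
  by [].
congr (_ && _); apply/idP/idP=> sub; apply/subsetP=> v vF.
  by rewrite !inE (subsetP sub) // andbT; apply: contraNneq xF => <-.
by have := subsetP sub v vF; rewrite !inE => /andP[].
Qed.

Lemma Dk_cone k (B W : T) x : x \in W -> x \notin B -> (forall y, y \in W :|: B -> ~~ e x y) ->
  forall F : T, x \notin F -> Dk k B W (x |: F) = Dk k B W F.
Proof.
move=> xW xB iso F xF; rewrite /Dk.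
have -> : (x |: F \subset W) = (F \subset W) by rewrite subUset sub1set xW.
congr (_ && _); apply/existsP/existsP=> -[M /and3P[mM kM cM]]; exists M; rewrite mM kM /=.
  apply: subset_trans cM _; apply/subsetP=> v; rewrite !inE.
  by case/orP=> [/andP[/norP[_ ->] ->]|->]; rewrite ?orbT.
apply/subsetP=> v vM; have := subsetP cM v vM; rewrite !inE.
case: (v =P x) => [ev|_]; last by [].
have [y yM [exy _]] := partner mM vM.
move: exy; rewrite ev => exy.
have yWB : y \in W :|: B.
  by have := subsetP cM y yM; rewrite !inE => /orP[/andP[_ ->]|->]; rewrite ?orbT.
by move: (iso y yWB); rewrite exy.
Qed.


Lemma Dk0 (B W F : T) : Dk 0 B W F = (F \subset W).
Proof.
rewrite /Dk; case: (F \subset W) => //=; apply/existsP; exists set0.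
by rewrite matching0 /= /cover big_set0 sub0set.
Qed.

Lemma Dk_free k (u : 'I_n) (W : T) : u \notin W -> (forall y, y \in W -> ~~ e u y) ->
  Dk k [set u] W =1 Dk k set0 W.
Proof.
move=> uW iso F; rewrite /Dk setU0; congr (_ && _).
apply/existsP/existsP=> -[M /and3P[mM kM cM]]; exists M; rewrite mM kM //=; last first.
  by apply: subset_trans cM (subsetUl _ _).
apply/subsetP=> v vM; have := subsetP cM v vM; rewrite !inE.
case: (v =P u) => [ev|_]; last by rewrite orbF.
have [y yM [evy _]] := partner mM vM; move: evy; rewrite ev => euy.
have := subsetP cM y yM; rewrite !inE => /orP[/andP[_ yW]|/eqP yu].
  by have := iso y yW; rewrite euy.
by move: euy; rewrite yu e_irr.
Qed.

Lemma Dk_pair k (a b : 'I_n) (W : T) : a \notin W -> b \notin W -> e a b ->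
  (forall y, y \in W -> ~~ e a y) -> (0 < k)%N ->
  Dk k (a |: [set b]) W =1 Dk k.-1 set0 W.
Proof.
move=> aW bW eab iso k0 F; rewrite /Dk setU0; congr (_ && _).
have ab : a != b by apply: contraTneq eab => ->; rewrite e_irr.
apply/existsP/existsP=> -[M /and3P[mM kM cM]].
  (* drop the (unique) edge through b *)
  pose M' := [set f in M | f \subset W :\: F].
  exists M'; have sub : M' \subset M by apply/subsetP=> f; rewrite inE => /andP[].
  rewrite (matchingS sub mM) /=; apply/andP; split; last first.
    apply/subsetP=> v /bigcupP[f]; rewrite inE => /andP[_ fs] vf.
    exact: (subsetP fs).
  have hb : forall f, f \in M :\: M' -> b \in f.
    move=> f; rewrite !inE negb_and => /andP[/orP[/negP//|nsub] fM].
    case/subsetPn: nsub => z zf zW.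
    have zc : z \in cover M by apply/bigcupP; exists f.
    have : (z == a) || (z == b).
      by move: (subsetP cM z zc) zW; rewrite !inE; case: (_ && _).
    case/orP=> [/eqP za|/eqP zb].
      have [y yM [ezy [g gM /andP[zg yg]]]] := partner mM zc.
      have := subsetP cM y yM; rewrite !inE => /orP[/andP[_ yW]|/orP[/eqP ya|/eqP yb]].
      - by have := iso y yW; rewrite -za ezy.
      - by move: ezy; rewrite za ya e_irr.
      - case/andP: mM => _ /trivIsetP ti.
        case: (eqVneq f g) => [fg|fg]; first by rewrite fg -yb.
        by have := ti _ _ fM gM fg; move/disjointFr/(_ zf); rewrite zg.
    by rewrite -zb.
  have := matching_card1 mM (subsetDl M M') hb.
  have := cardsD M M'; rewrite (setIidPr sub) => h1 h2; have h3 := subset_leq_card sub; move: h1 h2 h3 kM; move: #|M :\: M'| #|M'| #|M| => p q r; lia.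
have [g gE] : exists g : T, g = [set a; b] by exists [set a; b].
have eg : is_edge e g by apply/existsP; exists a; apply/existsP; exists b; rewrite eab gE eqxx.
have dis : [disjoint g & cover M].
  rewrite gE disjoint_sym disjoints_subset; apply/subsetP=> v vM.
  have := subsetP cM v vM; rewrite !inE => /andP[_ vW]; apply/negP=> /orP[]/eqP ev.
    by move: aW; rewrite -ev vW.
  by move: bW; rewrite -ev vW.
have [mgM gM] := matchingU1 mM eg dis.
exists (g |: M); rewrite mgM cardsU1 gM /=; apply/andP; split; first by move: kM k0; case: (k) => // k' /=; rewrite add1n ltnS.
rewrite coverU1; apply/subsetP=> v; rewrite !inE => /orP[|vM].
  by rewrite gE !inE => ->; rewrite !orbT.
by have := subsetP cM v vM; rewrite !inE => ->.
Qed.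


Definition gapsP (P : {set {set T}}) : bool :=
  [forall B in P, forall C in P, (B != C) ==> [forall f in B, forall g in C, gap e f g]].

Lemma gapsPP (P : {set {set T}}) : reflect
  (forall B C, B \in P -> C \in P -> B != C -> forall f g, f \in B -> g \in C -> gap e f g)
  (gapsP P).
Proof.
apply: (iffP forall_inP) => [H B C BP CP BC f g fB gC|H B BP].
  by have /forall_inP/(_ C CP) := H B BP; rewrite BC => /forall_inP/(_ f fB)/forall_inP; apply.
apply/forall_inP=> C CP; apply/implyP=> BC; apply/forall_inP=> f fB; apply/forall_inP=> g gC.
exact: H BP CP BC f g fB gC.
Qed.

Definition kadmW (W : T) (k : nat) (M : {set T}) : bool :=
  [&& matching e M, cover M \subset W &
   [exists P : {set {set T}}, [&& partition P M, gapsP P & (#|M| <= #|P| + k - 1)%N]]].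

Definition aimW (W : T) (k : nat) : nat := \max_(M | kadmW W k M) #|M|.

Lemma kadmW0 W k : kadmW W k set0.
Proof.
rewrite /kadmW matching0 /cover big_set0 sub0set /=; apply/existsP; exists set0.
rewrite partition_set0 eqxx cards0 /=; apply/andP; split=> //.
by apply/gapsPP=> B C; rewrite inE.
Qed.

Lemma gap_sym f g : gap e f g = gap e g f.
Proof.
rewrite /gap disjoint_sym; congr (_ && _).
apply/forall_inP/forall_inP=> H a aS; apply/forall_inP=> b bS.
  by have /forall_inP/(_ a aS) := H b bS; rewrite e_sym.
by have /forall_inP/(_ a aS) := H b bS; rewrite e_sym.
Qed.

Lemma aim_ext (Z W : T) k' k x y q :
  x \in W -> y \in W -> e x y -> Z \subset W -> x \notin Z -> y \notin Z -> (0 < k)%N ->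
  (forall z, z \in Z -> e x z || e y z -> z != q -> forall t, t \in Z -> ~~ e z t) ->
  (k' < k)%N || ((k' <= k)%N && (q \notin Z)) ->
  (aimW Z k' < aimW W k)%N.
Proof.
move=> xW yW exy ZW xZ yZ k0 Hq Hk.
rewrite /aimW (bigmax_eq_arg _ (kadmW0 Z k')); case: arg_maxnP; first exact: kadmW0.
move=> M' adm' _.
case/and3P: adm' => mM' cM' /existsP[P' /and3P[pP' gP' cardP']].
pose g : T := [set x; y].
have eg : is_edge e g by apply/existsP; exists x; apply/existsP; exists y; rewrite exy eqxx.
have dis : [disjoint g & cover M'].
  rewrite disjoint_sym disjoints_subset; apply/subsetP=> v vM.
  have vZ := subsetP cM' v vM; rewrite !inE; apply/negP=> /orP[]/eqP ev.
    by move: xZ; rewrite -ev vZ.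
  by move: yZ; rewrite -ev vZ.
have [mM gM'] := matchingU1 mM' eg dis.
have cM : cover (g |: M') \subset W.
  rewrite coverU1 subUset (subset_trans cM' ZW) andbT.
  by apply/subsetP=> v; rewrite !inE => /orP[]/eqP->.
pose touch (f : T) := [exists z in f, e x z || e y z].
have touchq : forall f, f \in M' -> touch f -> q \in f.
  move=> f fM /exists_inP[z zf tz].
  have zc : z \in cover M' by apply/bigcupP; exists f.
  have [t tc [ezt _]] := partner mM' zc.
  case: (eqVneq z q) => [<-//|zq].
  by have := Hq z (subsetP cM' z zc) tz zq t (subsetP cM' t tc); rewrite ezt.
have gapg : forall f, f \in M' -> ~~ touch f -> gap e g f.
  move=> f fM nt; apply/andP; split.
    apply: disjointWr dis; exact: bigcup_sup fM.
  apply/forall_inP=> a ag; apply/forall_inP=> b bf; apply/negP=> eab.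
  move/negP: nt; apply; apply/exists_inP; exists b => //.
  by move: ag; rewrite !inE => /orP[]/eqP ea; rewrite -ea eab ?orbT.
have covP' := cover_partition pP'.
suff [P [pP gP cP]] : exists P : {set {set T}},
    [/\ partition P (g |: M'), gapsP P & (#|g |: M'| <= #|P| + k - 1)%N].
  apply: (bigmax_sup (g |: M')); last by rewrite cardsU1 gM'.
  by rewrite /kadmW mM cM /=; apply/existsP; exists P; rewrite pP gP cP.
case: (boolP [exists f in M', touch f]) => [/exists_inP[f0 f0M tf0]|nt].
  have qf0 := touchq f0 f0M tf0.
  have qZ : q \in Z by apply: (subsetP cM'); apply/bigcupP; exists f0.
  have kk : (k' < k)%N by move: Hk; rewrite qZ andbF orbF.
  have f0c : f0 \in cover P' by rewrite covP'.
  set B0 := pblock P' f0.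
  have B0P : B0 \in P' by apply: pblock_mem.
  have f0B : f0 \in B0 by rewrite mem_pblock.
  have B0M : B0 \subset M' := partitionS pP' B0P.
  have tiP := partition_trivIset pP'.
  have pD := partitionD1 pP' B0P.
  have gB0 : (g |: B0) != set0 by apply/set0Pn; exists g; rewrite !inE eqxx.
  have dis2 : [disjoint g |: B0 & M' :\: B0].
    rewrite -setI_eq0; apply/eqP/setP=> h; rewrite !inE.
    case: (h =P g) => [->|_] /=; first by rewrite (negPf gM') andbF.
    by case: (h \in B0).
  have pP := partitionU1 pD gB0 dis2.
  have eqM : (g |: B0) :|: (M' :\: B0) = g |: M'.
    apply/setP=> h; rewrite !inE; case: (h =P g) => //= _.
    case hB: (h \in B0) => /=; last by [].
    by rewrite (subsetP B0M h hB).
  rewrite eqM in pP.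
  exists ((g |: B0) |: (P' :\ B0)); split=> //.
    apply/gapsPP=> B C; rewrite !inE.
    have side : forall C, C \in P' -> C != B0 -> forall f h, f \in g |: B0 -> h \in C -> gap e f h.
      move=> C1 C1P C1B f h; rewrite !inE => /orP[/eqP->|fB] hC.
        have hM : h \in M' by rewrite -covP'; apply/bigcupP; exists C1.
        apply: gapg => //; apply/negP=> th.
        have qh := touchq h hM th.
        have hf0 : h != f0.
          apply/negP=> /eqP ehf; move: (trivIsetP tiP C1 B0 C1P B0P C1B).
          by move/disjointFr/(_ hC); rewrite ehf f0B.
        case/andP: mM' => _ /trivIsetP tiM.
        by move: (tiM h f0 hM f0M hf0); move/disjointFr/(_ qh); rewrite qf0.
      by apply: (elimT (gapsPP P') gP' B0 C1 B0P C1P _ f h fB hC); rewrite eq_sym.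
    move=> /orP[/eqP->|/andP[CB0 CP]] /orP[/eqP->|/andP[DB0 DP]].
    - by rewrite eqxx.
    - by move=> _ f h fB hC; apply: (side C DP DB0).
    - by move=> _ f h fC hB; rewrite gap_sym; apply: (side B CP CB0).
    - by move=> CD f h fC hD; apply: (elimT (gapsPP P') gP' B C CP DP CD f h fC hD).
  rewrite cardsU1 gM' cardsU1.
  have -> : (g |: B0) \in P' :\ B0 = false.
    apply/negP; rewrite !inE => /andP[_ gBP].
    by move: gM'; rewrite -covP'; move/negP; apply; apply/bigcupP; exists (g |: B0); rewrite ?setU11.
  have cP := cardsD1 B0 P'; rewrite B0P in cP.
  move: cardP' kk cP; rewrite /=; move: #|M'| #|P'| #|P' :\ B0| => a b c h1 h2 h3; clear -h1 h2 h3; lia.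
have gnP : [set g] \notin P'.
  by apply/negP=> gP; move: gM'; rewrite -covP'; move/negP; apply; apply/bigcupP; exists [set g]; rewrite ?set11.
exists ([set g] |: P'); split.
- apply: partitionU1 => //; first by apply/set0Pn; exists g; rewrite inE.
  by rewrite disjoints1.
- apply/gapsPP=> B C; rewrite !inE.
  have side : forall C, C \in P' -> forall f h, f \in [set g] -> h \in C -> gap e f h.
    move=> C1 C1P f h; rewrite inE => /eqP-> hC.
    have hM : h \in M' by rewrite -covP'; apply/bigcupP; exists C1.
    apply: gapg => //; apply/negP=> th; move/negP: nt; apply; apply/exists_inP; by exists h.
  move=> /orP[/eqP->|BP] /orP[/eqP->|CP].
  + by rewrite eqxx.
  + by move=> _; apply: side.
  + by move=> _ f h fB hC; rewrite gap_sym; apply: (side B).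
  + by move/gapsPP: gP'; apply.
- have kk' : (k' <= k)%N by case/orP: Hk => [/ltnW|/andP[]].
  rewrite !cardsU1 gM' (negPf gnP) /=; move: cardP' kk' k0; move: #|M'| #|P'| => a b h1 h2 h3; clear -h1 h2 h3; lia.
Qed.


Section Forest.
Hypothesis G_forest : forest e.

Lemma no_cycle (a b t : 'I_n) l l2 : uniq (a :: b :: l ++ t :: l2) -> e a b ->
  path e b (l ++ t :: l2) -> e t a -> False.
Proof.
move=> u eab pb eta; apply: G_forest; exists (a :: b :: rcons l t); split.
- move: u; rewrite -cats1 -(cat1s t l2) catA -cat_cons -cat_cons cat_uniq.
  by case/andP.
- by rewrite /= size_rcons.
- by apply/allP=> z _; rewrite in_setT.
rewrite /cycle rcons_path /= last_rcons eta andbT eab /=.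
by move: pb; rewrite -cat1s catA cats1 cat_path => /andP[].
Qed.

Definition wp (W : T) (s : seq 'I_n) : bool :=
  [&& uniq s, all (fun x => x \in W) s & if s is a :: l then path e a l else true].

Lemma star_struct (W : T) : (forall x, x \in W -> exists2 y, y \in W & e x y) ->
  W != set0 ->
  exists u v p, [/\ u \in W, v \in W, e u v, (forall t, t \in W -> e v t -> t = u) &
    (forall z, z \in W -> e u z -> z != p -> forall t, t \in W -> e z t -> t = u)].
Proof.
move=> noiso /set0Pn[x0 x0W].
have [y0 y0W exy0] := noiso x0 x0W.
pose P m := [exists t : m.-tuple 'I_n, wp W t].
have P2 : P 2%N.
  apply/existsP; exists [tuple x0; y0]; rewrite /wp /= x0W y0W exy0 !andbT inE.
  by apply: contraTneq exy0 => ->; rewrite e_irr.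
have ub : forall m, P m -> (m <= n)%N.
  move=> m /existsP[t /and3P[ut _ _]]; rewrite -(size_tuple t) -(card_uniqP ut).
  by apply: (leq_trans (max_card _)); rewrite card_ord.
have [M PM maxM] := ex_maxnP (ex_intro P 2%N P2) ub.
have longer : forall s, wp W s -> (size s <= M)%N.
  by move=> s ws; apply: maxM; apply/existsP; exists (in_tuple s).
case/existsP: PM => tp wt.
have sz := size_tuple tp; have M2 := maxM _ P2.
move: wt sz M2; case: (tval tp) => [|v [|u rest]] /=; first by move=> _ <-.
  by move=> _ <-.
move=> ws sz _.
case/and3P: ws; rewrite /= => /and3P[vs us urest] /and3P[vW uW aW] /andP[evu prest].
have vleaf : forall z, z \in W -> e v z -> z = u.
  move=> z zW evz; case: (eqVneq z u) => // zu; exfalso.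
  case: (boolP (z \in v :: u :: rest)) => zs.
    move: zs; rewrite !inE (negPf zu) /= => /orP[/eqP zv|zr].
      by move: evz; rewrite zv e_irr.
    case/splitPr: zr prest us urest vs => l l2 prest us urest vs.
    apply: (@no_cycle v u z l l2) => //; last by rewrite e_sym.
    by rewrite /= vs us urest.
  have uz : uniq (z :: v :: u :: rest) by rewrite cons_uniq zs /= vs us urest.
  have := longer (z :: v :: u :: rest).
  rewrite /wp uz /= zW vW uW aW e_sym evz evu prest -sz ltnn.
  by move/(_ isT).
exists u, v, (head u rest); split=> //; first by rewrite e_sym.
move=> z zW euz zp t tW ezt.
have zu : z != u by apply: contraTneq euz => ->; rewrite e_irr.
case: (boolP (z \in v :: u :: rest)) => zs.
  move: zs; rewrite !inE (negPf zu) /= => /orP[/eqP zv|zr].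
    by apply: vleaf => //; rewrite -zv.
  exfalso; move: zp prest urest; case: rest zr aW us vs sz => [//|p rest'] /=.
  rewrite inE => /orP[/eqP->|zr]; first by rewrite eqxx.
  move=> _ us _ _ _ /andP[eup prest'] /andP[pr' ur'].
  case/splitPr: zr prest' pr' ur' us => l l2 prest' pr' ur' us.
  apply: (@no_cycle u p z l l2) => //; last by rewrite e_sym.
  by rewrite cons_uniq us /= pr' ur'.
case: (eqVneq t u) => // tu; exfalso.
case: (boolP (t \in v :: u :: rest)) => ts.
  move: ts; rewrite !inE (negPf tu) /= => /orP[/eqP tv|tr].
    by move: zu; rewrite (vleaf z zW) ?eqxx // e_sym -tv.
  case/splitPr: tr prest urest zs us => l l2 prest urest zs us.
  apply: (@no_cycle z u t l l2) => //; last by rewrite e_sym.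
  have zs' : z \notin u :: l ++ t :: l2 by move: zs; rewrite (in_cons v) negb_or => /andP[].
  by rewrite cons_uniq zs' cons_uniq us urest.
  by rewrite e_sym.
have tz : t != z by apply: contraTneq ezt => ->; rewrite e_irr.
have uz : uniq (t :: z :: u :: rest).
  move: ts zs; rewrite cons_uniq !inE !negb_or => /andP[_ /andP[tu' tr]] /andP[_ /andP[zu' zr]].
  by rewrite tz tu' tr cons_uniq inE negb_or zu' zr /= us urest.
have := longer (t :: z :: u :: rest).
rewrite /wp uz /= tW zW uW aW prest (e_sym t z) ezt (e_sym z u) euz -sz ltnn.
by move/(_ isT).
Qed.


Variable R : fieldType.

Definition claim (k : nat) (B W : T) (Tb : nat) :=
  forall j, bet R (Dk k B W) j != 0%N -> (#|W| <= j + Tb)%N.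

Section Star.
Variables (W : T) (k : nat) (u v p : 'I_n).
Hypothesis IH : forall k' (W' : T), (#|W'| < #|W|)%N -> claim k' set0 W' (aimW W' k' + k').
Hypotheses (k0 : (0 < k)%N) (uW : u \in W) (vW : v \in W) (euv : e u v)
  (vleaf : forall t, t \in W -> e v t -> t = u)
  (ustar : forall z, z \in W -> e u z -> z != p -> forall t, t \in W -> e z t -> t = u).

Lemma card_lt (Y : T) y : y \in Y -> #|Y :\ y|.+1 = #|Y|.
Proof. by move=> yY; rewrite (cardsD1 y Y) yY. Qed.

Lemma star_step m : forall Y : T, (#|Y| <= m)%N -> Y \subset W :\ u ->
  claim k [set u] Y (aimW W k + k - 1).
Proof.
elim: m => [|m IHm] Y cY YW.
  move=> j _; move: cY; rewrite leqn0 => /eqP->; exact: leq0n.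
have YWu : forall y, y \in Y -> (y \in W) && (y != u).
  by move=> y /(subsetP YW); rewrite !inE andbC.
have uY : u \notin Y by apply/negP=> /YWu; rewrite eqxx andbF.
have ltW : forall y, y \in Y -> (#|Y :\ y| < #|W|)%N.
  move=> y yY; apply: (@leq_ltn_trans #|W :\ u|); last by rewrite (cardsD1 u W) uW.
  apply: subset_leq_card; apply: subset_trans YW; exact: subD1set.
case: (boolP [exists l in Y, e u l && [forall t in W, e l t ==> (t == u)]]).
  case/exists_inP=> l lY /andP[eul /forall_inP lleaf].
  have lleaf' : forall t, t \in W -> e l t -> t = u by move=> t tW elt; apply/eqP; exact: (implyP (lleaf t tW)).
  have lW : l \in W by case/andP: (YWu l lY).
  move=> j nz; rewrite -(card_lt lY).
  apply: (@claim_split _ R (Dk k [set u] Y) l _ (aimW (Y :\ l) k.-1 + k.-1) (aimW W k + k - 1)) nz.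
  - move=> j' nz'; rewrite (eq_bet R j' (Dk_del k [set u] lY)) in nz'.
    rewrite (eq_bet R j' (Dk_pair (a := l) (b := u) _ _ _ _ k0)) in nz'.
    + exact: (IH (ltW l lY)).
    + by rewrite !inE eqxx.
    + by rewrite !inE negb_and uY orbT.
    + by rewrite e_sym.
    + move=> y; rewrite !inE => /andP[_ yY]; apply/negP=> ely.
      by move: uY; rewrite -(lleaf' y (andP (YWu y yY)).1 ely) yY.
  - move=> j' nz'; rewrite (eq_bet R j' (Dk_lk k [set u] lY)) in nz'.
    apply: (IHm (Y :\ l)) => //.
      by move: cY; rewrite -(card_lt lY) ltnS.
    by apply: subset_trans YW; apply: subD1set.
  - have := @aim_ext (Y :\ l) W k.-1 k u l p uW lW eul.
    have ZW : Y :\ l \subset W by apply/subsetP=> y /setD1P[_ /YWu/andP[]].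
    move/(_ ZW); rewrite !inE eqxx /= (negPf uY) andbF => /(_ isT isT k0).
    have H : forall z, z \in Y :\ l -> e u z || e l z -> z != p ->
        forall t, t \in Y :\ l -> ~~ e z t.
      move=> z; rewrite inE => /andP[_ zY] /orP[euz|elz] zp t; rewrite inE => /andP[_ tY].
        apply/negP=> ezt; move: uY.
        by rewrite -(ustar (andP (YWu z zY)).1 euz zp (andP (YWu t tY)).1 ezt) tY.
      by move: uY; rewrite -(lleaf' z (andP (YWu z zY)).1 elz) zY.
    move/(_ H); rewrite prednK // leqnn /= => h.
    move: h k0; move: (aimW (Y :\ l) k.-1) (aimW W k) => a b h1 h2.
    case: (k) h2 => // k' _ /=; clear -h1; lia.
  - by [].
move/exists_inPn=> noleaf.
have vY : v \notin Y.
  apply/negP=> vY'; move/negP: (noleaf v vY'); apply; rewrite euv /=.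
  by apply/forall_inP=> t tW; apply/implyP=> evt; rewrite (vleaf tW evt).
case: (boolP [exists q in Y, e u q]).
  case/exists_inP=> q qY euq.
  have qonly : forall z, z \in Y -> e u z -> z = q.
    move=> z zY euz; case: (eqVneq z p) => [->|zp].
      case: (eqVneq q p) => [->//|qp]; move: (noleaf q qY); rewrite euq /=.
      case/negP; apply/forall_inP=> t tW; apply/implyP=> eqt; apply/eqP.
      exact: (ustar (andP (YWu q qY)).1 euq qp tW eqt).
    move: (noleaf z zY); rewrite euz /=; case/negP; apply/forall_inP=> t tW.
    apply/implyP=> ezt; apply/eqP; exact: (ustar (andP (YWu z zY)).1 euz zp tW ezt).
  have qW : q \in W by case/andP: (YWu q qY).
  have nou : forall y, y \in Y :\ q -> ~~ e u y.
    move=> y; rewrite inE => /andP[yq yY]; apply/negP=> euy.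
    by move: yq; rewrite (qonly y yY euy) inE eqxx.
  have ZW : Y :\ q \subset W by apply/subsetP=> y /setD1P[_ /YWu/andP[]].
  have aimq : forall k', (k' <= k)%N -> (aimW (Y :\ q) k' < aimW W k)%N.
    move=> k' kk; apply: (@aim_ext (Y :\ q) W k' k u v u uW vW euv ZW) => //.
    - by rewrite !inE (negPf uY) andbF.
    - by rewrite !inE (negPf vY) andbF.
    - move=> z zZ /orP[euz|evz]; first by rewrite (negPf (nou z zZ)) in euz.
      have zW : z \in W by case/setD1P: zZ => _ /YWu/andP[].
      by move: zZ; rewrite (vleaf zW evz) !inE (negPf uY) andbF.
    - by rewrite kk !inE (negPf uY) andbF orbT.
  move=> j nz; rewrite -(card_lt qY).
  apply: (@claim_split _ R (Dk k [set u] Y) q _ (aimW (Y :\ q) k.-1 + k.-1) (aimW (Y :\ q) k + k)) nz.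
  - move=> j' nz'; rewrite (eq_bet R j' (Dk_del k [set u] qY)) setUC in nz'.
    rewrite (eq_bet R j' (Dk_pair (a := u) (b := q) _ _ _ _ k0)) in nz'.
    + exact: (IH (ltW q qY)).
    + by rewrite !inE negb_and uY orbT.
    + by rewrite !inE eqxx.
    + by [].
    + exact: nou.
  - move=> j' nz'; rewrite (eq_bet R j' (Dk_lk k [set u] qY)) in nz'.
    rewrite (eq_bet R j' (Dk_free k _ nou)) in nz'; last by rewrite !inE negb_and uY orbT.
    exact: (IH (ltW q qY)).
  - have := aimq k.-1 (leq_pred k); move: k0; move: (aimW (Y :\ q) k.-1) (aimW W k) => a b.
    case: (k) => // k' _ /= h; clear -h; lia.
  - have := aimq k (leqnn k); move: k0; move: (aimW (Y :\ q) k) (aimW W k) => a b.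
    case: (k) => // k' _ /= h; clear -h; lia.
move/exists_inPn=> nou.
move=> j nz; rewrite (eq_bet R j (Dk_free k uY nou)) in nz.
have YW' : (#|Y| < #|W|)%N.
  apply: (@leq_ltn_trans #|W :\ u|); last by rewrite (cardsD1 u W) uW.
  exact: subset_leq_card.
have := IH YW' nz.
have ZW : Y \subset W by apply/subsetP=> y /YWu/andP[].
have : (aimW Y k < aimW W k)%N.
  apply: (@aim_ext Y W k k u v u uW vW euv ZW) => //.
  - move=> z zY /orP[euz|evz]; first by rewrite (negPf (nou z zY)) in euz.
    have zW : z \in W by case/YWu/andP: zY.
    by move: zY; rewrite (vleaf zW evz) (negPf uY).
  - by rewrite leqnn uY orbT.
move: k0; move: (aimW Y k) (aimW W k) => a b.
case: (k) => // k' _ /= h1 h2; clear -h1 h2; lia.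
Qed.

End Star.

Lemma main_bound m : forall k (W : T), (#|W| <= m)%N -> claim k set0 W (aimW W k + k).
Proof.
elim: m => [|m IHm] k W cW j nz.
  by move: cW; rewrite leqn0 => /eqP->.
case: (eqVneq W set0) => [->|Wn0]; first by rewrite cards0.
case: (posnP k) => [k0|kpos].
  case/set0Pn: Wn0 => x xW; exfalso.
  have Hc : forall F : T, x \notin F -> Dk 0 set0 W (x |: F) = Dk 0 set0 W F.
    by move=> F _; rewrite !Dk0 subUset sub1set xW.
  by move: nz; rewrite k0 (bet_cone R Hc) eqxx.
case: (boolP [exists x in W, [forall y in W, ~~ e x y]]).
  case/exists_inP=> x xW /forall_inP iso; exfalso.
  have Hc := @Dk_cone k set0 W x xW (negbT (in_set0 x)).
  have iso' : forall y, y \in W :|: set0 -> ~~ e x y by move=> y; rewrite setU0; apply: iso.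
  by move: nz; rewrite (bet_cone R (Hc iso')) eqxx.
move/exists_inPn=> noiso.
have noiso' : forall x, x \in W -> exists2 y, y \in W & e x y.
  move=> x xW; have := noiso x xW; case/forall_inPn=> y yW; rewrite negbK => exy.
  by exists y.
have [u [v [p [uW vW euv vleaf ustar]]]] := star_struct noiso' Wn0.
have IH : forall k' (W' : T), (#|W'| < #|W|)%N -> claim k' set0 W' (aimW W' k' + k').
  by move=> k' W' lt; apply: IHm; rewrite -ltnS; apply: leq_trans lt cW.
rewrite -(card_lt uW).
apply: (@claim_split _ R (Dk k set0 W) u _ (aimW W k + k - 1) (aimW W k + k)) nz.
- move=> j' nz'; rewrite (eq_bet R j' (Dk_del k set0 uW)) setU0 in nz'.
  apply: (star_step IH kpos uW vW euv vleaf ustar (leqnn _)) nz' => //.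
- move=> j' nz'; exfalso; rewrite (eq_bet R j' (Dk_lk k set0 uW)) in nz'.
  have vu : v != u by apply: contraTneq euv => ->; rewrite e_irr.
  have vWu : v \in W :\ u by rewrite !inE vu vW.
  have Hc := @Dk_cone k set0 (W :\ u) v vWu (negbT (in_set0 v)).
  have iso' : forall y, y \in (W :\ u) :|: set0 -> ~~ e v y.
    move=> y; rewrite setU0 !inE => /andP[yu yW]; apply/negP=> evy.
    by move: yu; rewrite (vleaf y yW evy) eqxx.
  by move: nz'; rewrite (bet_cone R (Hc iso')) eqxx.
- by move: kpos; case: (k) => // k' _; rewrite addnS subn1 /= ltnS leqnn.
- by [].
Qed.

End Forest.

End Comb.


Section Final.
Variables (n : nat) (e : rel 'I_n).
Hypotheses (e_sym : symmetric e) (e_irr : irreflexive e) (G_forest : forest e).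
Local Notation T := {set 'I_n}.

Lemma mono_eq k (b1 b2 : {ffun 'I_n -> nat}) : (forall u, (0 < b1 u) = (0 < b2 u))%N ->
  mono_in_sqpow e k b1 = mono_in_sqpow e k b2.
Proof.
move=> H; rewrite /mono_in_sqpow; apply: eq_existsb => M; congr [&& _, _ & _].
by apply: eq_forallb => u; rewrite H.
Qed.

Lemma kvalid_cone k (a : {ffun 'I_n -> nat}) v : (2 <= a v)%N ->
  forall F : T, v \notin F -> kvalid e k a (v |: F) = kvalid e k a F.
Proof.
move=> av F vF; rewrite /kvalid; congr (_ && _).
  apply/forall_inP/forall_inP=> H u uF; first by apply: H; rewrite !inE uF orbT.
  by move: uF; rewrite !inE => /orP[/eqP->|/H//]; apply: leq_trans av.
apply: mono_eq => u; rewrite /subind !ffunE !inE.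
case: (u =P v) => [->|_] /=; last by [].
by rewrite (negPf vF) subn0 subn1; move: av; case: (a v) => [|[|]].
Qed.

Lemma kvalid_Dk k (a : {ffun 'I_n -> nat}) : (forall v, a v <= 1)%N ->
  kvalid e k a =1 Dk e k set0 [set v | (0 < a v)%N].
Proof.
move=> a1 F; rewrite /kvalid /Dk setU0; congr (_ && _).
  apply/forall_inP/subsetP=> H u uF; [by rewrite inE H|by have := H u uF; rewrite inE].
rewrite /mono_in_sqpow; apply/existsP/existsP=> -[M /and3P[mM cM fM]].
  exists M; rewrite mM (eqP cM) leqnn /=; apply/subsetP=> u uM.
  have := forall_inP fM u uM; rewrite /subind ffunE !inE.
  by case: (u \in F) => /=; [rewrite subn1; move: (a1 u); case: (a u) => [|[|]]|rewrite subn0].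
have [M' [mM' sub cM']] := sub_matching_k mM cM.
exists M'; rewrite mM' cM' eqxx /=; apply/forall_inP=> u uM'.
have uM : u \in cover M.
  by case/bigcupP: uM' => f fM' uf; apply/bigcupP; exists f => //; apply: (subsetP sub).
have := subsetP fM u uM; rewrite !inE => /andP[uF au].
by rewrite /subind ffunE (negPf uF) subn0.
Qed.

Lemma sum_01 (a : {ffun 'I_n -> nat}) : (forall v, a v <= 1)%N ->
  (\sum_v a v = #|[set v | (0 < a v)%N]|)%N.
Proof.
move=> a1; rewrite -sum1_card [RHS]big_mkcond /=; apply: eq_bigr => v _.
by rewrite inE; move: (a1 v); case: (a v) => [|[|]].
Qed.

Lemma aimW_le W k : (aimW e W k <= aim e k)%N.
Proof.
apply/bigmax_leqP=> M /and3P[mM _ /existsP[P /and3P[pP gP cP]]].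
apply: leq_bigmax_cond; apply/asboolP; split=> //; exists P; split=> //.
- by apply/gapsPP.
- apply/andP; split.
    apply/allP=> c /mapP[B BP ->]; rewrite card_gt0.
    by apply: (partition_neq0 pP); rewrite -mem_enum.
  rewrite size_map -cardE sumnE big_map big_enum /= -(card_partition pP).
  exact: cP.
- move=> B _ [s [us ss als cs]]; apply: G_forest; exists s; split=> //.
  by apply/allP=> z _; rewrite in_setT.
Qed.

End Final.

Unset Implicit Arguments.

Theorem theorem4p7 (R : fieldType) (n : nat) (e : rel 'I_n)
  (e_sym : symmetric e) (e_irr : irreflexive e) (G_forest : forest e)
  (k : nat) (hk1 : (1 <= k)%N) (hk2 : (k <= mat e)%N) :
  reg_le e R k (aim e k + k).
Proof.
move=> i a; rewrite betti_bet => nz.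
case: (boolP [exists v, (1 < a v)%N]).
  case/existsP=> v av; exfalso; move: nz.
  by rewrite (bet_cone R (@kvalid_cone _ e k a v av)) eqxx.
move/existsPn=> a1'.
have a1 : forall v, (a v <= 1)%N by move=> v; rewrite leqNgt a1'.
rewrite (eq_bet R i (kvalid_Dk e k a1)) in nz.
rewrite (sum_01 a1).
have h1 := main_bound e_sym e_irr G_forest (leqnn _) nz.
have h2 := aimW_le G_forest [set v | (0 < a v)%N] k.
move: h1 h2; move: (#|_|) (aimW _ _ _) => x y h1 h2; clear -h1 h2; lia.
Qed.
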